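(* Let $(x_0,x_1)$ be a state with $0\leq x_0\leq 1$ for which the character $ch(x_0,x_1)$ is defined, and let $q\geq 0$ be an integer with $q\leq ch(x_0,x_1)$. Then Paul has a winning strategy for the $q$-round pathological liar game with $1$ lie and initial state $(x_0,x_1)$.
   Context: Pathological liar game with $1$ lie: a state is a pair $(x_0,x_1)$ of nonnegative integers. In each round Paul chooses a legal question $(a_0,a_1)$ with integers $0\leq a_i\leq x_i$, and Carole answers Y or N; the new state is $(a_0,\,a_1+x_0-a_0)$ after Y, or $(x_0-a_0,\,x_1-a_1+a_0)$ after N. Paul wins the $q$-round game iff after $q$ rounds $x_0+x_1\geq 1$. Weight: $wt_q(x_0,x_1)=(q+1)x_0+x_1$. The character $ch(x_0,x_1)$ is the maximum integer $q\geq 0$ such that $wt_q(x_0,x_1)\geq 2^q$. *)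

(* Defs.v *)
From mathcomp Require Import all_boot.
Set Implicit Arguments. Unset Strict Implicit. Unset Printing Implicit Defensive.

Definition ans_Y (x0 x1 a0 a1 : nat) : nat * nat := (a0, a1 + (x0 - a0)).
Definition ans_N (x0 x1 a0 a1 : nat) : nat * nat := (x0 - a0, x1 - a1 + a0).

Fixpoint paul_wins (q x0 x1 : nat) {struct q} : Prop :=
  match q with
  | 0 => 1 <= x0 + x1
  | q'.+1 =>
      exists a0 a1, [/\ a0 <= x0, a1 <= x1,
        paul_wins q' (ans_Y x0 x1 a0 a1).1 (ans_Y x0 x1 a0 a1).2 &
        paul_wins q' (ans_N x0 x1 a0 a1).1 (ans_N x0 x1 a0 a1).2]
  end.

Definition wt (q x0 x1 : nat) : nat := q.+1 * x0 + x1.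

Definition is_ch (x0 x1 c : nat) : Prop :=
  2 ^ c <= wt c x0 x1 /\ (forall q, 2 ^ q <= wt q x0 x1 -> q <= c).

(* Main.v *)
Require Import Defs.
From mathcomp Require Import all_boot.
From mathcomp Require Import zify.

Lemma pow_ge q : q.+1 <= 2 ^ q.
Proof. elim: q => [|q IH] //; rewrite expnS; lia. Qed.

Lemma win_aux q : forall x0 x1, x0 <= 1 -> 2 ^ q <= wt q x0 x1 -> paul_wins q x0 x1.
Proof.
elim: q => [|q IH] x0 x1 Hx0 Hw.
  by rewrite /wt /= in Hw *; lia.
rewrite /wt expnS in Hw.
have Hp := pow_ge q.
move: Hw Hp; set P := 2 ^ q => Hw Hp.
case: x0 Hx0 Hw => [|[|x0]] // _ Hw.
- exists 0, (x1 %/ 2); split => //.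
  + exact: leq_div.
  + apply: IH => //; rewrite /wt /ans_Y /=; lia.
  + apply: IH => //; rewrite /wt /ans_N /=; lia.
- exists 1, (P - q.+1); split => //.
  + lia.
  + apply: IH => //; rewrite /wt /ans_Y /= -/P; lia.
  + apply: IH => //; rewrite /wt /ans_N /= -/P; lia.
Qed.

Lemma wt_mono x0 x1 q c : x0 <= 1 -> q <= c -> wt q x0 x1 < 2 ^ q -> wt c x0 x1 < 2 ^ c.
Proof.
move=> Hx0 /subnK <-; elim: (c - q) => [|k IH] // H.
have := IH H; rewrite /wt addSn expnS; lia.
Qed.

Theorem lemma12 (x0 x1 c q : nat) :
  x0 <= 1 -> is_ch x0 x1 c -> q <= c -> paul_wins q x0 x1.
Proof.
move=> Hx0 [Hc _] Hqc; apply: win_aux => //.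
case: (leqP (2 ^ q) (wt q x0 x1)) => // H.
have := @wt_mono x0 x1 q c Hx0 Hqc H; lia.
Qed.
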